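(* For every $n\geq 2$, the ladder graph $L_n$ satisfies $\mathcal{R}(L_n)=2$. Consequently, every ladder graph $L_n$ ($n\geq 1$) is a circle graph.
   Context: All graphs are finite and simple. For a word $w$ and distinct letters $x,y$ occurring in $w$, $x$ and $y$ alternate in $w$ if deleting all letters other than copies of $x$ and $y$ yields a word of the form $xyxy\cdots$ or $yxyx\cdots$ (of even or odd length). A graph $G=(V,E)$ is word-representable if there is a word $w$ over $V$ (each vertex occurring in $w$) such that for all distinct $x,y\in V$, $x$ and $y$ alternate in $w$ iff $(x,y)\in E$. A word is $k$-uniform if each letter occurs exactly $k$ times; $G$ is $k$-word-representable if some $k$-uniform word represents it; the representation number $\mathcal{R}(G)$ is the least such $k$. The ladder graph $L_n$ has vertices $1,\ldots,n,1',\ldots,n'$ and the $3n-2$ edges $(i,i+1)$ and $(i',(i+1)')$ for $1\leq i\leq n-1$ and $(i,i')$ for $1\leq i\leq n$. A circle graph is a graph whose vertices can be associated with chords of a circle so that two vertices are adjacent iff their chords cross. *)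

(* Defs.v *)
From Stdlib Require Import Reals.
From mathcomp Require Import all_boot.
Set Implicit Arguments. Unset Strict Implicit. Unset Printing Implicit Defensive.

(* A simple graph on a finite vertex type V is given by an adjacency relation
   (symmetric and irreflexive in all uses below). *)

(* x and y alternate in w: the subword of w on {x,y} has no two equal
   consecutive letters, i.e. it is of the form xyxy... or yxyx... *)
Definition alternate (V : eqType) (w : seq V) (x y : V) : bool :=
  sorted (fun a b => a != b) [seq z <- w | (z == x) || (z == y)].

Definition represents (V : finType) (E : rel V) (w : seq V) : Prop :=
  (forall v : V, v \in w) /\
  (forall x y : V, x != y -> (alternate w x y <-> E x y)).

Definition uniform (V : finType) (w : seq V) (k : nat) : Prop :=
  forall v : V, count_mem v w = k.

Definition k_word_representable (V : finType) (E : rel V) (k : nat) : Prop :=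
  exists w : seq V, uniform w k /\ represents E w.

Definition representation_number_is (V : finType) (E : rel V) (k : nat) : Prop :=
  k_word_representable E k /\
  (forall j, k_word_representable E j -> k <= j).

(* Ladder graph L_n: vertex (i, false) is i+1, vertex (i, true) is (i+1)'. *)
Definition ladder (n : nat) : rel ('I_n * bool) :=
  fun u v =>
    ((u.2 == v.2) && ((u.1.+1 == v.1 :> nat) || (v.1.+1 == u.1 :> nat)))
    || ((u.1 == v.1) && (u.2 != v.2)).
Arguments ladder n : clear implicits.

(* A point of the circle is described by its angle
   parameter in [0,1); a chord is a pair of distinct points; the chords of
   a representation have pairwise distinct endpoints (standard convention).
   Two chords cross iff their endpoints interleave around the circle. *)
Definition on_circle (t : R) : Prop := Rle 0 t /\ Rlt t 1.

Definition chords_cross (c d : R * R) : Prop :=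
  let a := Rmin c.1 c.2 in let b := Rmax c.1 c.2 in
  let p := Rmin d.1 d.2 in let q := Rmax d.1 d.2 in
  (Rlt a p /\ Rlt p b /\ Rlt b q) \/ (Rlt p a /\ Rlt a q /\ Rlt q b).

Definition circle_graph (V : finType) (E : rel V) : Prop :=
  exists f : V -> R * R,
    (forall v, on_circle (f v).1 /\ on_circle (f v).2 /\ (f v).1 <> (f v).2) /\
    (forall u v, u <> v ->
       (f u).1 <> (f v).1 /\ (f u).1 <> (f v).2 /\
       (f u).2 <> (f v).1 /\ (f u).2 <> (f v).2) /\
    (forall u v, u <> v -> (E u v <-> chords_cross (f u) (f v))).

(* Main.v *)
Require Import Defs.
From Stdlib Require Import Reals.
From mathcomp Require Import all_boot zify.
Set Implicit Arguments. Unset Strict Implicit. Unset Printing Implicit Defensive.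

Lemma filt_iota (Q : pred nat) (s : seq nat) N :
  sorted ltn s -> (forall x, x \in s -> x < N) ->
  (forall p, p < N -> Q p = (p \in s)) -> [seq p <- iota 0 N | Q p] = s.
Proof.
move=> ss sN QE; apply: (irr_sorted_eq ltn_trans ltnn) => //.
  exact: (sorted_filter ltn_trans _ (iota_ltn_sorted 0 N)).
move=> p; rewrite mem_filter mem_iota add0n /=.
case: (ltnP p N) => pN; first by rewrite QE // andbT.
by rewrite andbF; apply/esym/negP => /sN; rewrite ltnNge pN.
Qed.

Definition good (V : finType) (a b : V -> nat) (N : nat) :=
  [/\ injective a, injective b, (forall u v, a u != b v),
      (forall v, a v < b v) & (forall v, b v < N)].


Definition letter (V : finType) (v0 : V) (a b : V -> nat) (p : nat) : V :=
  odflt v0 [pick v | (a v == p) || (b v == p)].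

Definition Pp (V : finType) (a b : V -> nat) (p : nat) : bool :=
  [exists v, (a v == p) || (b v == p)].

Definition mkword (V : finType) (v0 : V) (a b : V -> nat) N : seq V :=
  map (letter v0 a b) [seq p <- iota 0 N | Pp a b p].

Definition cross (V : finType) (a b : V -> nat) (x y : V) : bool :=
  ((a x < a y) && (a y < b x) && (b x < b y)) ||
  ((a y < a x) && (a x < b y) && (b y < b x)).

Lemma letterP (V : finType) (v0 : V) a b N : good a b N ->
  forall v p, (a v == p) || (b v == p) -> letter v0 a b p = v.
Proof.
case=> ia ib dab _ _ v p Hv; rewrite /letter.
case: pickP => [v' Hv'|/(_ v)]; last by rewrite Hv.
move: Hv Hv' => /orP[]/eqP <- /orP[]/eqP.
- by move/ia.
- by move=> E; move: (dab v v'); rewrite E eqxx.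
- by move=> E; move: (dab v' v); rewrite E eqxx.
- by move/ib.
Qed.

Lemma keyP (V : finType) (v0 : V) a b N : good a b N ->
  forall v p, ((letter v0 a b p == v) && Pp a b p) = ((a v == p) || (b v == p)).
Proof.
move=> G v p; rewrite /Pp.
case: existsP => [[v' Hv']|Hn]; last first.
  rewrite andbF; apply/esym/negP => H; apply: Hn; by exists v.
have E1 := letterP v0 G Hv'; rewrite andbT E1.
apply/eqP/idP => [<-//|H]; by rewrite -E1 (letterP v0 G H).
Qed.

Lemma count_word (V : finType) (v0 : V) a b N : good a b N ->
  forall v, count_mem v (mkword v0 a b N) = 2.
Proof.
move=> G v; have [ia ib dab ab bN] := G.
rewrite /mkword count_map count_filter -size_filter.
rewrite (@filt_iota _ [:: a v; b v]) //=.
- by rewrite ab.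
- move=> x; rewrite !inE => /orP[]/eqP->; last exact: bN.
  exact: ltn_trans (ab v) (bN v).
- by move=> p _; rewrite (keyP v0 G) !inE ![p == _]eq_sym.
Qed.

Lemma filt_word (V : finType) (v0 : V) a b N : good a b N ->
  forall x y, [seq z <- mkword v0 a b N | (z == x) || (z == y)] =
  map (letter v0 a b) [seq p <- iota 0 N | (a x == p) || (b x == p) || (a y == p) || (b y == p)].
Proof.
move=> G x y; rewrite /mkword filter_map -filter_predI; congr map.
apply: eq_filter => p /=.
by rewrite andb_orl !(keyP v0 G) orbA.
Qed.

Lemma alt_cross_lt (V : finType) (v0 : V) a b N : good a b N ->
  forall x y, x != y -> a x < a y ->
  alternate (mkword v0 a b N) x y = cross a b x y.
Proof.
move=> G x y xy axy; have [ia ib dab ab bN] := G.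
have ltN : forall v, a v < N by move=> v; exact: ltn_trans (ab v) (bN v).
have Lx1 : letter v0 a b (a x) = x by apply: (letterP v0 G); rewrite eqxx.
have Lx2 : letter v0 a b (b x) = x by apply: (letterP v0 G); rewrite eqxx orbT.
have Ly1 : letter v0 a b (a y) = y by apply: (letterP v0 G); rewrite eqxx.
have Ly2 : letter v0 a b (b y) = y by apply: (letterP v0 G); rewrite eqxx orbT.
have yx : y != x by rewrite eq_sym.
have n1 : b x != a y by rewrite eq_sym dab.
have n2 : b x != b y by apply: contra xy => /eqP/ib ->.
have Hx := ab x; have Hy := ab y.
rewrite /alternate filt_word //.
have QE : forall s, sorted ltn s -> (forall p, p < N -> ((a x == p) || (b x == p) || (a y == p) || (b y == p)) = (p \in s)) ->
   (forall z, z \in s -> z < N) ->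
   [seq p <- iota 0 N | (a x == p) || (b x == p) || (a y == p) || (b y == p)] = s.
  by move=> s ss E sN; apply: filt_iota.
case: (ltngtP (b x) (a y)) => [c1|c2|c3]; last by rewrite c3 eqxx in n1.
- rewrite (QE [:: a x; b x; a y; b y]) /=.
  + rewrite Lx1 Lx2 Ly1 Ly2 eqxx /cross /=; apply/esym; lia.
  + rewrite Hx c1 Hy; done.
  + by move=> p _; rewrite !inE ![p == _]eq_sym !orbA.
  + by move=> z; rewrite !inE => /or4P[]/eqP->.
- case: (ltngtP (b x) (b y)) => [d1|d2|d3]; last by rewrite d3 eqxx in n2.
  + rewrite (QE [:: a x; a y; b x; b y]) /=.
    * rewrite Lx1 Lx2 Ly1 Ly2 xy yx /cross /=; apply/esym; lia.
    * by rewrite axy c2 d1.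
    * move=> p _; rewrite !inE ![p == _]eq_sym; by case: (a x == p); case: (b x == p); case: (a y == p); case: (b y == p).
    * by move=> z; rewrite !inE => /or4P[]/eqP->.
  + rewrite (QE [:: a x; a y; b y; b x]) /=.
    * rewrite Lx1 Lx2 Ly1 Ly2 xy yx eqxx /cross /=; apply/esym; lia.
    * by rewrite axy Hy d2.
    * move=> p _; rewrite !inE ![p == _]eq_sym; by case: (a x == p); case: (b x == p); case: (a y == p); case: (b y == p).
    * by move=> z; rewrite !inE => /or4P[]/eqP->.
Qed.

Lemma alt_cross (V : finType) (v0 : V) a b N : good a b N ->
  forall x y, x != y -> alternate (mkword v0 a b N) x y = cross a b x y.
Proof.
move=> G x y xy; have [ia ib dab ab bN] := G.
case: (ltngtP (a x) (a y)) => [c|c|c].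
- exact: alt_cross_lt.
- have -> : alternate (mkword v0 a b N) x y = alternate (mkword v0 a b N) y x.
    by rewrite /alternate; congr sorted; apply: eq_filter => z; rewrite orbC.
  rewrite /cross orbC -/(cross a b y x); apply: alt_cross_lt => //.
  by rewrite eq_sym.
- by move/ia: c => c; rewrite c eqxx in xy.
Qed.

Lemma word_rep (V : finType) (v0 : V) a b N (E : rel V) : good a b N ->
  (forall x y, x != y -> E x y = cross a b x y) ->
  k_word_representable E 2.
Proof.
move=> G HE; exists (mkword v0 a b N); split.
  exact: count_word.
split.
  by move=> v; rewrite -has_pred1 has_count (count_word v0 G).
by move=> x y xy; rewrite (alt_cross v0 G xy) HE.
Qed.

Definition lA n (v : 'I_n * bool) : bool := v.2 == odd v.1.
Definition la n (v : 'I_n * bool) : nat := if lA v then 2 * v.1 else 2 * v.1 + 3.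
Definition lb n (v : 'I_n * bool) : nat := if lA v then 4 * n - 2 * v.1 else 4 * n + 3 - 2 * v.1.

Lemma ladder_good n : good (@la n) (@lb n) (4 * n + 4).
Proof.
split.
- move=> [i s] [j t]; rewrite /la /lA /= => H.
  have hi := ltn_ord i; have hj := ltn_ord j.
  have Eij : i = j :> nat.
    by move: H; case: s; case: t; case: (odd i); case: (odd j) => /=; lia.
  have Est : s = t.
    move: H; rewrite -Eij; case: s; case: t; case: (odd i) => //=; lia.
  by rewrite Est (val_inj Eij).
- move=> [i s] [j t]; rewrite /lb /lA /= => H.
  have hi := ltn_ord i; have hj := ltn_ord j.
  have Eij : i = j :> nat.
    by move: H; case: s; case: t; case: (odd i); case: (odd j) => /=; lia.
  have Est : s = t.
    move: H; rewrite -Eij; case: s; case: t; case: (odd i) => //=; lia.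
  by rewrite Est (val_inj Eij).
- move=> [i s] [j t]; rewrite /la /lb /lA /=; apply/eqP => H.
  have hi := ltn_ord i; have hj := ltn_ord j.
  by move: H; case: s; case: t; case: (odd i); case: (odd j) => /=; lia.
- move=> [i s]; rewrite /la /lb /lA /=.
  have hi := ltn_ord i.
  by case: s; case: (odd i) => /=; lia.
- move=> [i s]; rewrite /lb /lA /=.
  have hi := ltn_ord i.
  by case: s; case: (odd i) => /=; lia.
Qed.

Lemma ladder_cross n (x y : 'I_n * bool) : x != y ->
  ladder n x y = cross (@la n) (@lb n) x y.
Proof.
case: x y => [i s] [j t]; rewrite /ladder /cross /la /lb /lA /= => xy.
have hi := ltn_ord i; have hj := ltn_ord j.
have xy' : (i != j :> nat) || (s != t).
  apply: contraLR xy; rewrite negb_or !negbK => /andP[/eqP/val_inj -> /eqP ->].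
  by rewrite eqxx.
move: xy'; clear xy; rewrite -(inj_eq val_inj) /=.
by case: s; case: t; case Oi: (odd i); case Oj: (odd j) => /=; lia.
Qed.

Lemma uniq_path_neq (T : eqType) (x : T) s : uniq (x :: s) -> path (fun a b => a != b) x s.
Proof.
elim: s x => //= y s IH x /andP[]; rewrite inE negb_or => /andP[xy _] u.
by rewrite xy IH.
Qed.

Lemma ladder_min n : 2 <= n -> forall j, k_word_representable (ladder n) j -> 2 <= j.
Proof.
move=> n2 j [w [U [Hin Halt]]].
have h0 : 0 < n by lia.
have h1 : 1 < n by lia.
pose x : 'I_n * bool := (Ordinal h0, false).
pose y : 'I_n * bool := (Ordinal h1, true).
case: j U => [|[|j]] U //.
  by move: (Hin x); rewrite -has_pred1 has_count; move: (U x) => /= ->.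
have uw : uniq w by apply: count_mem_uniq => z; rewrite U Hin.
have xy : x != y by [].
have := (Halt x y xy).1.
rewrite /alternate.
have : uniq [seq z <- w | (z == x) || (z == y)] by apply: filter_uniq.
case: [seq z <- w | _] => [|z s] u; first by move=> /(_ isT).
by move=> /(_ (uniq_path_neq u)).
Qed.

Lemma dlt (N x y : nat) : 0 < N -> (Rlt (Rdiv (INR x) (INR N)) (Rdiv (INR y) (INR N)) <-> x < y).
Proof.
move=> N0.
have NP : Rlt 0 (INR N) by apply: lt_0_INR; apply/ltP.
have IP : Rlt 0 (/ INR N) by apply: Rinv_0_lt_compat.
split=> H.
- apply/ltP; apply: INR_lt; unfold Rdiv in H.
  exact: Rmult_lt_reg_r IP H.
- unfold Rdiv; apply: Rmult_lt_compat_r => //; apply: lt_INR; exact/ltP.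
Qed.

Lemma dneq (N x y : nat) : 0 < N -> x != y -> Rdiv (INR x) (INR N) <> Rdiv (INR y) (INR N).
Proof.
move=> N0 xy E; case: (ltngtP x y) => [h|h|h]; last by rewrite h eqxx in xy.
- by move/(dlt x y N0): h; rewrite E => /Rlt_irrefl.
- by move/(dlt y x N0): h; rewrite E => /Rlt_irrefl.
Qed.

Lemma word_circle (V : finType) a b N (E : rel V) : 0 < N -> good a b N ->
  (forall x y, x != y -> E x y = cross a b x y) -> circle_graph E.
Proof.
move=> N0 G HE; have [ia ib dab ab bN] := G.
have aN : forall v, a v < N by move=> v; exact: ltn_trans (ab v) (bN v).
pose d x := Rdiv (INR x) (INR N).
have d0 : forall x, x < N -> on_circle (d x).
  move=> x xN; split.
  - unfold d, Rdiv; apply: Rmult_le_pos; first exact: pos_INR.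
    apply: Rlt_le; apply: Rinv_0_lt_compat; apply: lt_0_INR; exact/ltP.
  - apply: (Rlt_le_trans _ (d N)); first exact/dlt.
    right; apply: Rdiv_diag; apply: not_0_INR; apply/eqP; rewrite -lt0n //.
exists (fun v => (d (a v), d (b v))); split; [|split].
- move=> v /=; split; [exact: d0|split; [exact: d0|]].
  by apply: dneq => //; rewrite neq_ltn ab.
- move=> u v uv /=.
  have uv' : u != v by apply/eqP.
  split; [|split; [|split]]; apply: dneq => //;
    first [exact: dab | by rewrite eq_sym dab | by apply: contra uv' => /eqP/ia -> | by apply: contra uv' => /eqP/ib ->].
- move=> u v uv.
  have uv' : u != v by apply/eqP.
  rewrite HE // /cross /chords_cross /=.
  have hu : Rle (d (a u)) (d (b u)) by apply: Rlt_le; apply/dlt.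
  have hv : Rle (d (a v)) (d (b v)) by apply: Rlt_le; apply/dlt.
  rewrite (Rmin_left _ _ hu) (Rmax_right _ _ hu) (Rmin_left _ _ hv) (Rmax_right _ _ hv).
  split.
  + case/orP => /andP[/andP[h1 h2] h3]; [left|right];
      (split; [|split]); apply/dlt => //.
  + case => [[h1 [h2 h3]]|[h1 [h2 h3]]]; apply/orP; [left|right];
      move/(dlt _ _ N0): h1 => ->; move/(dlt _ _ N0): h2 => ->; move/(dlt _ _ N0): h3 => ->; done.
Qed.

Theorem theorem19 :
  (forall n : nat, 2 <= n -> representation_number_is (ladder n) 2) /\
  (forall n : nat, 1 <= n -> circle_graph (ladder n)).
Proof.
split=> n hn.
- split; last exact: ladder_min.
  have h0 : 0 < n by lia.
  apply: (@word_rep _ (Ordinal h0, false) (@la n) (@lb n) (4*n+4) (ladder n) (ladder_good n)).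
  by move=> x y xy; rewrite ladder_cross.
- apply: (@word_circle _ (@la n) (@lb n) (4*n+4) (ladder n)).
  + by rewrite addn4.
  + exact: ladder_good.
  + by move=> x y xy; rewrite ladder_cross.
Qed.
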